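(* If $f, g : X \to \mathbb{R}$ are limsup functions, then $f+g$, $\min(f,g)$ and $\max(f,g)$ are limsup functions.
   Context: Let $A$ be a non-empty countable set and $T$ a pruned tree on $A$ (a set of finite sequences of elements of $A$, closed under initial segments, in which every sequence has a proper extension in $T$). Let $X$ be the set of infinite branches of $T$, with the topology generated by the cylinder sets $O(s) = \{x \in X : s \text{ is an initial segment of } x\}$, $s \in T$. A function $f : X \to \mathbb{R}$ is a limsup function if there exists $u : T \to \mathbb{R}$ with $f(x) = \limsup_{t\to\infty} u(x_0,\dots,x_t)$ for every $x \in X$. *)

(* Defs.v *)
From mathcomp Require Import all_boot all_order all_algebra.
From mathcomp Require Import all_classical all_reals all_analysis.
Set Implicit Arguments. Unset Strict Implicit. Unset Printing Implicit Defensive.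
Import Order.TTheory GRing.Theory Num.Theory.
Local Open Scope classical_set_scope.
Local Open Scope ring_scope.

Definition is_tree (A : Type) (T : set (seq A)) : Prop :=
  forall s n, T s -> T (take n s).

Definition is_pruned (A : Type) (T : set (seq A)) : Prop :=
  forall s, T s -> exists t, T t /\ (size s < size t)%N /\ take (size s) t = s.

Definition is_branch (A : Type) (T : set (seq A)) (x : nat -> A) : Prop :=
  forall n, T (mkseq x n).

Definition branches (A : Type) (T : set (seq A)) := {x : nat -> A | is_branch T x}.

Definition limsup_function (R : realType) (A : Type) (T : set (seq A))
    (f : branches T -> R) : Prop :=
  exists u : seq A -> R, forall x : branches T,
    ((f x)%:E = limn_esup (fun t => (u (mkseq (proj1_sig x) t.+1))%:E))%E.

(* Main.v *)
Require Import Defs.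
From mathcomp Require Import all_boot all_order all_algebra.
From mathcomp Require Import all_classical all_reals all_analysis.
From mathcomp Require Import lra zify.
Import Order.TTheory GRing.Theory Num.Theory.
Local Open Scope classical_set_scope.
Local Open Scope ring_scope.
Lemma limsupE {R : realType} (v : nat -> R) (l : R) :
  limn_esup (fun t => (v t)%:E) = l%:E <->
  ((forall e : R, 0 < e -> exists N, forall m, (N <= m)%N -> v m <= l + e) /\
   (forall e : R, 0 < e -> forall N, exists2 m, (N <= m)%N & l - e <= v m)).
Proof.
rewrite limn_esup_lim (cvg_lim _ (@cvg_esups_inf R _)) //.
split.
- move=> H; split.
  + move=> e e0.
    have : (ereal_inf (range (esups (fun t => (v t)%:E))) < (l + e)%:E)%E.
      by rewrite H lte_fin ltrDl.
    move=> /ereal_inf_lt [y [n _ <-]] hy; exists n => m nm.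
    rewrite -lee_fin; apply: le_trans (ltW hy).
    by apply: ereal_sup_ubound; exists m.
  + move=> e e0 N.
    have : (ereal_inf (range (esups (fun t => (v t)%:E))) <= esups (fun t => (v t)%:E) N)%E.
      by apply: ereal_inf_lbound; exists N.
    rewrite H => hN.
    have : ((l - e)%:E < esups (fun t => (v t)%:E) N)%E.
      by apply: lt_le_trans hN; rewrite lte_fin ltrBlDr ltrDl.
    move=> /ereal_sup_gt [y [m /= Nm <-]] hy; exists m => //.
    by rewrite -lee_fin ltW.
- move=> [H1 H2]; apply/eqP; rewrite eq_le; apply/andP; split.
  + apply/lee_addgt0Pr => e e0.
    have [N HN] := H1 e e0.
    apply: (@le_trans _ _ (esups (fun t => (v t)%:E) N)).
      by apply: ereal_inf_lbound; exists N.
    apply: ge_ereal_sup => _ [m /= Nm <-].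
    by rewrite -EFinD lee_fin HN.
  + apply: le_ereal_inf_tmp => _ [n _ <-].
    apply/lee_addgt0Pr => e e0.
    have [m nm hm] := H2 e e0 n.
    apply: (@le_trans _ _ (v m + e)%:E).
      by rewrite lee_fin -lerBlDr.
    rewrite EFinD leeD2r //.
    by apply: ereal_sup_ubound; exists m.
Qed.
Fixpoint fmax {R : realType} (F : nat -> R) (n : nat) : R :=
  match n with 0 => F 0%N | n'.+1 => Num.max (fmax F n') (F n) end.

Lemma fmax_ge {R : realType} (F : nat -> R) n i : (i <= n)%N -> F i <= fmax F n.
Proof.
elim: n => [|n IH] /=; first by rewrite leqn0 => /eqP ->.
rewrite leq_eqVlt => /orP [/eqP ->|]; first by rewrite le_max lexx orbT.
by rewrite ltnS => /IH h; rewrite le_max h.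
Qed.

Lemma fmax_le {R : realType} (F : nat -> R) n y :
  (forall i, (i <= n)%N -> F i <= y) -> fmax F n <= y.
Proof.
elim: n => [|n IH] H /=; first exact: H.
rewrite ge_max IH ?H // => i lin; apply: H; exact: leqW.
Qed.

Lemma fmax_ext {R : realType} (F G : nat -> R) n :
  (forall i, (i <= n)%N -> F i = G i) -> fmax F n = fmax G n.
Proof.
elim: n => [|n IH] H /=; first exact: H.
by rewrite IH ?H // => i lin; apply: H; exact: leqW.
Qed.

Lemma ev_const (z : nat -> int) k (B : int) :
  (forall t, (k <= t)%N -> z t <= z t.+1) -> (forall t, (k <= t)%N -> z t <= B) ->
  exists T, (k <= T)%N /\ forall t, (T <= t)%N -> z t = z T.
Proof.
move=> Hm HB.
have mono : forall d T, (k <= T)%N -> z T <= z (T + d)%N.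
  elim=> [|d IH] T kT; first by rewrite addn0.
  apply: le_trans (IH T kT) _; rewrite addnS; apply: Hm; lia.
case: (pselect (exists T, (k <= T)%N /\ forall t, (T <= t)%N -> z t = z T)) => // nE.
exfalso.
have step : forall T, (k <= T)%N -> exists t, (T <= t)%N /\ z T + 1 <= z t.
  move=> T kT.
  case: (pselect (exists t, (T <= t)%N /\ z t <> z T)) => [[t [Tt ne]]|nex].
    exists t; split => //.
    have := mono (t - T)%N T kT; rewrite subnKC //.
    move: ne => /eqP; lia.
  exfalso; apply: nE; exists T; split => // t Tt.
  by case: (z t =P z T) => // ne; exfalso; apply: nex; exists t.
have big : forall n : nat, exists T, (k <= T)%N /\ z k + n%:Z <= z T.
  elim=> [|n [T [kT hT]]]; first by exists k; rewrite addr0.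
  have [t [Tt ht]] := step T kT; exists t; split; first lia.
  move: hT ht; lia.
have [T [kT hT]] := big `|B - z k|.+1%N.
have := HB T kT; move: hT; lia.
Qed.
Definition zf {R : realType} (p : nat -> nat -> R) k t : int :=
  Num.floor (k.+1%:R * p t k).
Definition qf {R : realType} (p : nat -> nat -> R) k t : R :=
  (zf p k t)%:~R / k.+1%:R.

Lemma qf_le {R : realType} (p : nat -> nat -> R) k t : qf p k t <= p t k.
Proof.
rewrite /qf /zf ler_pdivrMr ?ltr0Sn // mulrC; exact: floor_le.
Qed.

Lemma qf_gt {R : realType} (p : nat -> nat -> R) k t :
  p t k - k.+1%:R^-1 < qf p k t.
Proof.
rewrite /qf /zf ltr_pdivlMr ?ltr0Sn // mulrBl mulVf ?pnatr_eq0 //.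
have := floorD1_gt (k.+1%:R * p t k); rewrite intrD mulrC; lra.
Qed.

Lemma zf_mono {R : realType} (p : nat -> nat -> R) k t :
  (p t k <= p t.+1 k) -> zf p k t <= zf p k t.+1.
Proof.
move=> H; rewrite /zf; apply: le_floor; apply: ler_wpM2l => //.
Qed.

Definition wf {R : realType} (p : nat -> nat -> R) t k : R :=
  if (k == t) || (zf p k t.-1 < zf p k t) then qf p k t else qf p t t.
Definition vf {R : realType} (p : nat -> nat -> R) t : R := fmax (wf p t) t.

Lemma find_first (z : nat -> int) k :
  (forall t, (k <= t)%N -> z t <= z t.+1) -> forall d,
  exists t', [/\ (k <= t')%N, (t' <= k + d)%N, z t' = z (k + d)%N &
                 (t' == k) || (z t'.-1 < z t')].
Proof.
move=> Hm; elim=> [|d [t' [kt td zt c]]].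
  by exists k; rewrite addn0 eqxx leqnn.
have hm := Hm (k + d)%N (leq_addr _ _).
case: (ltP (z (k + d)%N) (z (k + d).+1)) => hlt.
  exists (k + d.+1)%N; rewrite addnS /= hlt orbT; split => //; lia.
exists t'; split => //; first lia.
by rewrite zt addnS; apply/eqP; rewrite eq_le hm hlt.
Qed.

Lemma gen_limsup (R : realType) (p : nat -> nat -> R) (h : R) :
  (forall k t, (k <= t)%N -> p t k <= p t.+1 k) ->
  (forall k, exists M, forall t, (k <= t)%N -> p t k <= M) ->
  (forall e, 0 < e -> exists K, forall k t, (K <= k)%N -> (k <= t)%N -> p t k <= h + e) ->
  (forall k e, 0 < e -> exists2 t, (k <= t)%N & h - e <= p t k) ->
  limn_esup (fun t => (vf p t)%:E) = h%:E.
Proof.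
move=> Hm Hb Hup Hlo.
have zm : forall k t, (k <= t)%N -> zf p k t <= zf p k t.+1.
  by move=> k t kt; apply: zf_mono; apply: Hm.
have evc : forall k, exists T, (k <= T)%N /\ forall t, (T <= t)%N -> zf p k t = zf p k T.
  move=> k; have [M HM] := Hb k.
  apply: (@ev_const _ k (Num.floor (k.+1%:R * M))) => [t kt|t kt]; first exact: zm.
  by rewrite /zf; apply: le_floor; apply: ler_wpM2l => //; apply: HM.
have pmono : forall k d t, (k <= t)%N -> p t k <= p (t + d)%N k.
  move=> k; elim=> [|d IH] t kt; first by rewrite addn0.
  apply: le_trans (IH t kt) _; rewrite addnS; apply: Hm; lia.
apply/limsupE; split.
- move=> e e0; have [K HK] := Hup e e0.
  have fin : forall K', exists T, forall k t, (k < K')%N -> (T <= t)%N ->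
      zf p k t = zf p k t.+1.
    elim=> [|K' [T HT]]; first by exists 0%N.
    have [T' [kT' HT']] := evc K'.
    exists (maxn T T') => k t; rewrite ltnS leq_eqVlt => /orP [/eqP ->|kK] tT.
      by rewrite HT' ?HT' //; lia.
    apply: HT => //; lia.
  have [T HT] := fin K.
  exists (maxn T.+1 K) => m Nm; rewrite /vf; apply: fmax_le => i im.
  have hmm : qf p m m <= h + e.
    by apply: le_trans (qf_le _ _ _) _; apply: HK => //; lia.
  rewrite /wf; case: ifP => // cond.
  case: (leqP K i) => Ki.
    by apply: le_trans (qf_le _ _ _) _; apply: HK.
  exfalso; move: cond.
  have -> : (i == m) = false by apply/eqP; lia.
  have : zf p i m.-1 = zf p i m.-1.+1 by apply: HT => //; lia.
  have -> : m.-1.+1 = m by lia.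
  by move=> ->; rewrite ltxx.
- move=> e e0 N.
  pose k := maxn N (Num.Def.archi_bound (2 / e)).
  have kbig : 2 / e < k.+1%:R.
    apply: lt_le_trans (archi_boundP _) _; first by rewrite divr_ge0 // ltW.
    rewrite ler_nat; lia.
  have ck : k.+1%:R^-1 < e / 2.
    rewrite -(invrK (e / 2)) ltf_pV2 ?posrE ?ltr0Sn ?invr_gt0 ?divr_gt0 //.
    by rewrite invf_div.
  have [T [kT HT]] := evc k.
  have [t' [kt' t'T zt' c]] := @find_first (zf p k) k (zm k) (T - k)%N.
  rewrite subnKC // in zt' t'T.
  have [t'' kt'' ht''] := Hlo k (e / 2) (divr_gt0 e0 (ltr0Sn _ 1)).
  exists t'; first by move: kt'; rewrite /k; lia.
  have hv : qf p k t' <= vf p t'.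
    rewrite /vf; apply: (le_trans _ (@fmax_ge _ (wf p t') t' k kt')); by rewrite /wf eq_sym c.
  apply: le_trans hv.
  have eqq : qf p k t' = qf p k (maxn t'' T).
    by rewrite /qf zt' (HT (maxn t'' T)) // leq_maxr.
  rewrite eqq.
  have h1 := qf_gt p k (maxn t'' T).
  have h2 : p t'' k <= p (maxn t'' T) k.
    by have := pmono k (maxn t'' T - t'')%N t'' kt''; rewrite subnKC // leq_maxl.
  move: ck h1 h2 ht''; set ci := (k.+1%:R^-1 : R); set qq := qf p k _; set p1 := p t'' k; set p2 := p _ k.
  lra.
Qed.

Lemma vf_ext {R : realType} (p p' : nat -> nat -> R) t :
  (forall k, (k <= t)%N -> p t k = p' t k /\ p t.-1 k = p' t.-1 k) ->
  vf p t = vf p' t.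
Proof.
move=> H; rewrite /vf; apply: fmax_ext => i it.
have [e1 e2] := H i it; have [e3 _] := H t (leqnn t).
by rewrite /wf /qf /zf e1 e2 e3.
Qed.

Definition pop {R : realType} (op : R -> R -> R) (a b : nat -> R) (t k : nat) : R :=
  op (fmax (fun i => a (k + i)%N) (t - k)) (fmax (fun i => b (k + i)%N) (t - k)).

Lemma pop_ext {R : realType} (op : R -> R -> R) (a b a' b' : nat -> R) t :
  (forall m, (m <= t)%N -> a m = a' m /\ b m = b' m) ->
  vf (pop op a b) t = vf (pop op a' b') t.
Proof.
move=> H; apply: vf_ext => k kt; rewrite /pop; split; congr op; apply: fmax_ext => i hi;
  by case: (H (k + i)%N ltac:(lia)).
Qed.

Lemma take_mkseq {A : Type} (x : nat -> A) m t : (m <= t)%N ->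
  take m.+1 (mkseq x t.+1) = mkseq x m.+1.
Proof.
by move=> mt; rewrite /mkseq -map_take take_iota; congr (map _ (iota _ _)); lia.
Qed.

Lemma op_closed (R : realType) (A : countType) (T : set (seq A))
  (op : R -> R -> R)
  (opm : forall x x' y y', x <= x' -> y <= y' -> op x y <= op x' y')
  (opup : forall x y e, 0 < e -> op (x + e / 2) (y + e / 2) <= op x y + e)
  (oplo : forall x y e, 0 < e -> op x y - e <= op (x - e / 2) (y - e / 2))
  (f g : branches T -> R) :
  limsup_function f -> limsup_function g ->
  limsup_function (fun x => op (f x) (g x)).
Proof.
move=> [u Hu] [v Hv].
pose al (s : seq A) m := u (take m.+1 s).
pose be (s : seq A) m := v (take m.+1 s).
exists (fun s => vf (pop op (al s) (be s)) (size s).-1) => x.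
set a := fun m => u (mkseq (proj1_sig x) m.+1).
set b := fun m => v (mkseq (proj1_sig x) m.+1).
have -> : (fun t => (vf (pop op (al (mkseq (proj1_sig x) t.+1)) (be (mkseq (proj1_sig x) t.+1)))
     (size (mkseq (proj1_sig x) t.+1)).-1)%:E) = (fun t => (vf (pop op a b) t)%:E).
  apply: funext => t; rewrite size_mkseq /=; congr EFin; apply: pop_ext => m mt.
  by rewrite /al /be /a /b take_mkseq.
have [Ha1 Ha2] := (limsupE _ _).1 (esym (Hu x)).
have [Hb1 Hb2] := (limsupE _ _).1 (esym (Hv x)).
have bnd : forall (c : nat -> R) (F : R), (forall e : R, 0 < e -> exists N, forall m, (N <= m)%N -> c m <= F + e) ->
    exists M, forall m, c m <= M.
  move=> c F H; have [N HN] := H 1 ltr01.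
  exists (Num.max (fmax c N) (F + 1)) => m; case: (leqP N m) => Nm.
    by rewrite le_max HN // orbT.
  by rewrite le_max fmax_ge // ltnW.
have [Ma HMa] := bnd a _ Ha1; have [Mb HMb] := bnd b _ Hb1.
apply: esym; apply: gen_limsup.
- move=> k t kt; rewrite /pop; have -> : (t.+1 - k = (t - k).+1)%N by lia.
  by apply: opm => /=; rewrite le_max lexx.
- move=> k; exists (op Ma Mb) => t kt; rewrite /pop; apply: opm; apply: fmax_le => i _.
  + exact: HMa.
  + exact: HMb.
- move=> e e0.
  have e20 : 0 < e / 2 by rewrite divr_gt0.
  have [Na HNa] := Ha1 _ e20; have [Nb HNb] := Hb1 _ e20.
  exists (maxn Na Nb) => k t Kk kt; rewrite /pop.
  apply: le_trans (opup _ _ _ e0); apply: opm; apply: fmax_le => i _.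
  + apply: HNa; lia.
  + apply: HNb; lia.
- move=> k e e0.
  have e20 : 0 < e / 2 by rewrite divr_gt0.
  have [m1 km1 h1] := Ha2 _ e20 k; have [m2 km2 h2] := Hb2 _ e20 k.
  exists (maxn m1 m2); first lia.
  rewrite /pop; apply: le_trans (oplo _ _ _ e0) _; apply: opm.
  + apply: le_trans h1 _.
    have := @fmax_ge _ (fun i => a (k + i)%N) (maxn m1 m2 - k) (m1 - k) ltac:(lia).
    by rewrite subnKC.
  + apply: le_trans h2 _.
    have := @fmax_ge _ (fun i => b (k + i)%N) (maxn m1 m2 - k) (m2 - k) ltac:(lia).
    by rewrite subnKC.
Qed.

Theorem mainTheorem2 (R : realType) (A : countType) (a0 : A)
    (T : set (seq A)) (hT : is_tree T) (hP : is_pruned T)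
    (f g : branches T -> R) :
  limsup_function f -> limsup_function g ->
  [/\ limsup_function (fun x => f x + g x),
      limsup_function (fun x => Num.min (f x) (g x)) &
      limsup_function (fun x => Num.max (f x) (g x))].
Proof.
move=> Hf Hg; split.
- apply: (@op_closed R A T (fun x y => x + y)) => //.
  + by move=> x x' y y' *; lra.
  + by move=> x y e *; lra.
  + by move=> x y e *; lra.
- apply: (@op_closed R A T (fun x y => Num.min x y)) => //.
  + move=> x x' y y' h1 h2.
    by case: (leP x y); case: (leP x' y') => *; lra.
  + move=> x y e e0.
    by case: (leP x y); case: (leP (x + e / 2) (y + e / 2)) => *; lra.
  + move=> x y e e0.
    by case: (leP x y); case: (leP (x - e / 2) (y - e / 2)) => *; lra.
- apply: (@op_closed R A T (fun x y => Num.max x y)) => //.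
  + move=> x x' y y' h1 h2.
    by case: (leP x y); case: (leP x' y') => *; lra.
  + move=> x y e e0.
    by case: (leP x y); case: (leP (x + e / 2) (y + e / 2)) => *; lra.
  + move=> x y e e0.
    by case: (leP x y); case: (leP (x - e / 2) (y - e / 2)) => *; lra.
Qed.
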